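(* Let $\Delta$ be an S-map and $\mu$ a real number. Suppose every maximal semisimple S-submap of $\Delta$ satisfies the condition $\mathcal X(\mu)$. Let $S$ be the number of selected external edges of $\Delta$. Then $$S\ge(1-2\mu)\sum_{\Pi\in\Delta(2)}|\partial\Pi|.$$
   Context: A map is a connected subcomplex of an oriented combinatorial 2-sphere together with a set of cycles (its contours) such that each oriented edge lies either in the boundary cycle $\partial\Pi$ of some face $\Pi$ or in a contour of the map (and each oriented edge of the complex is counted once in the union of face boundaries and contours). $\Delta(1)$ and $\Delta(2)$ denote the sets of edges and faces; $|\partial\Pi|$ is the length of the boundary cycle of $\Pi$; $\|X\|$ is cardinality. An edge is external if at least one of its orientations lies on a contour of the map. A selection on a map is a set of nontrivial reduced subpaths of boundary cycles of faces, closed under taking nontrivial subpaths; an S-map is a map with a selection. An external edge is selected if an orientation of it lying on the boundary of a face is a selected path. A map is semisimple if every edge is incident to a face. A semisimple S-map $\Delta$ satisfies $\mathcal X(\mu)$ if the number $S$ of its selected external edges satisfies $S\ge\|\Delta(1)\|-\mu\sum_{\Pi\in\Delta(2)}|\partial\Pi|$. The maximal semisimple S-submaps of $\Delta$ are the S-submaps given by the connected components of the complex obtained from $\Delta$ by deleting all edges not incident to any face (with the induced contours and selection). *)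

(* Defs.v *)
From HB Require Import structures.
From mathcomp Require Import all_boot all_order all_algebra.
Set Implicit Arguments. Unset Strict Implicit. Unset Printing Implicit Defensive.
Import Order.TTheory GRing.Theory Num.Theory.

(* A map is encoded as an oriented combinatorial map on the sphere:
   - D       : darts = oriented edges of the complex;
   - inv     : reversal of orientation (fixed-point-free involution);
   - fc      : successor of a dart along the boundary walk of the region of the
               sphere to its left (a permutation). Its orbits are the boundary
               cycles of the 2-cells of the sphere: those marked by [isf] are the
               boundary cycles of the faces of the map, the others are the
               contours of the map. Hence every oriented edge lies exactly once
               either on a face boundary or on a contour.
   - vertices are the orbits of [fc \o inv] (darts with a common origin);
   - [sel]   : the selection, a set of paths (sequences of darts). *)

Section MapDefs.
Variable D : finType.
Variables (inv fc : D -> D) (isf : pred D) (sel : pred (seq D)).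

Definition glue : rel D := fun x y => (y == inv x) || (y == fc x).

Definition nverts := fcard (fc \o inv) D.
Definition nedges := fcard inv D.
Definition ncells := fcard fc D.

Definition face_subpath (p : seq D) : Prop :=
  exists2 d, isf d & 0 < size p <= order fc d /\ p = traject fc d (size p).

Definition reduced_path (p : seq D) : bool :=
  match p with [::] => true | x :: q => path (fun a b => b != inv a) x q end.

Definition is_Smap : Prop :=
  [/\ involutive inv, (forall d, inv d != d), injective fc &
      (forall d, isf (fc d) = isf d)] /\
      [/\ (forall x y, connect glue x y),
      (* the surface is a 2-sphere: Euler characteristic 2 (or the map is a
         single vertex without edges) *)
      (#|D| = 0 \/ nverts + ncells = nedges + 2),
      (forall p, sel p -> face_subpath p /\ reduced_path p) &
      (forall p q, sel p -> infix q p -> 0 < size q -> sel q)].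

Definition external (d : D) : bool := ~~ isf d || ~~ isf (inv d).
Definition selected (d : D) : bool :=
  (isf d && sel [:: d]) || (isf (inv d) && sel [:: inv d]).

Definition edge_rep (d : D) : bool := froots inv d.
Definition face_rep (d : D) : bool := isf d && froots fc d.

Definition n_edges_in (C : {set D}) : nat := #|[set d in C | edge_rep d]|.
Definition sel_ext_in (C : {set D}) : nat :=
  #|[set d in C | edge_rep d && external d && selected d]|.
Definition face_len_in (C : {set D}) : nat :=
  \sum_(d in C | face_rep d) order fc d.

Definition cond_X (R : realFieldType) (mu : R) (C : {set D}) : Prop :=
  ((n_edges_in C)%:R - mu * (face_len_in C)%:R <= (sel_ext_in C)%:R)%R.

Definition kept (d : D) : bool := isf d || isf (inv d).
Definition ss_link : rel D := fun x y =>
  [&& kept x, kept y & (y == inv x) || fconnect (fc \o inv) x y].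
(* darts of the connected component (after deleting the edges not incident to
   any face) containing the kept dart d0 *)
Definition ss_component (d0 : D) : {set D} := [set d | connect ss_link d0 d].

End MapDefs.

(* Main.v *)
Require Import Defs.
From HB Require Import structures.
From mathcomp Require Import all_boot all_order all_algebra.
From mathcomp Require Import lra.
Import Order.TTheory GRing.Theory Num.Theory.

Lemma inv_orbit (D : finType) (inv : D -> D) (d r : D) :
  involutive inv -> fconnect inv d r -> r = d \/ r = inv d.
Proof.
move=> invK /iter_findex <-; elim: (findex _ _ _) => [|n IH]; first by left.
by case: IH => /= ->; [right|left; rewrite invK].
Qed.

Lemma rep_or (D : finType) (inv : D -> D) (d : D) :
  involutive inv -> edge_rep inv d || edge_rep inv (inv d).
Proof.
move=> invK; have injI : injective inv := can_inj invK.
have symI : connect_sym (frel inv) := fconnect_sym injI.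
rewrite /edge_rep.
case: (@inv_orbit D inv d _ invK (connect_root (frel inv) d)) => E.
  by rewrite /roots E eqxx.
have E2 : froot inv (inv d) = froot inv d.
  symmetry; apply/(fingraph.rootP symI); exact: (fconnect1 inv d).
by rewrite /roots E2 E eqxx orbT.
Qed.

Lemma faces_le (D : finType) (fc : D -> D) (isf : pred D) :
  injective fc -> (forall d, isf (fc d) = isf d) ->
  \sum_(d | isf d && froots fc d) order fc d = \sum_(d | isf d) 1.
Proof.
move=> injf isfc.
have symf : connect_sym (frel fc) := fconnect_sym injf.
have isfC : forall x y, fconnect fc x y -> isf x = isf y.
  move=> x y /connectP [p]; elim: p x => [|z p IH] x /=; first by move=> _ ->.
  by case/andP=> /eqP <- pp ly; rewrite -(IH _ pp ly) isfc.
rewrite [RHS](partition_big (froot fc) (fun r => isf r && froots fc r)) /=; last first.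
  by move=> i Hi; rewrite -(isfC _ _ (connect_root _ i)) Hi roots_root.
apply: eq_bigr => r /andP [Hr /eqP rr].
rewrite sum1_card /order; apply: eq_card => i; rewrite !inE.
rewrite unfold_in -{2}rr root_connect // symf.
apply/idP/andP => [H|[]//]; split=> //; by rewrite (isfC _ _ H).
Qed.

Lemma count_le (D : finType) (inv : D -> D) (isf : pred D) (sel : pred (seq D)) :
  involutive inv ->
  \sum_(d | isf d) 1 + \sum_d (edge_rep inv d && external inv isf d && selected inv isf sel d : nat)
  <= 2 * \sum_d (kept inv isf d && edge_rep inv d : nat).
Proof.
move=> invK; have injI : injective inv := can_inj invK.
have -> : \sum_(d | isf d) 1 = \sum_d ((isf d && edge_rep inv d : nat) + (isf (inv d) && ~~ edge_rep inv (inv d) : nat)).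
  rewrite big_split /= -(reindex_inj injI (P := predT) (F := fun d => (isf d && ~~ edge_rep inv d : nat))) /=.
  rewrite -big_split big_mkcond /=; apply: eq_bigr => d _.
  by case: (isf d); case: (edge_rep inv d).
rewrite -big_split big_distrr /=; apply: leq_sum => d _.
have := @rep_or D inv d invK.
rewrite /external /selected /kept.
case: (edge_rep inv d); case: (edge_rep inv (inv d)); case: (isf d); case: (isf (inv d));
  case: (sel [:: d]); case: (sel [:: inv d]) => //.
Qed.

Theorem proposition4p1 (R : realFieldType) (mu : R) (D : finType)
  (inv fc : D -> D) (isf : pred D) (sel : pred (seq D)) :
  is_Smap inv fc isf sel ->
  (forall d0 : D, kept inv isf d0 ->
     cond_X inv fc isf sel mu (ss_component inv fc isf d0)) ->
  ((1 - 2 * mu) * (face_len_in fc isf [set: D])%:R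
     <= (sel_ext_in inv isf sel [set: D])%:R)%R.
Proof.
move=> [[invK invnd injf isfc] [conn _ _ _]] HX.
have injI : injective inv := can_inj invK.
pose e := ss_link inv fc isf.
pose K := [set d | kept inv isf d].
pose P := equivalence_partition (connect e) K.
have symE : symmetric e.
  move=> x y; rewrite /e /ss_link andbCA; congr (_ && (_ && _)).
  congr (_ || _); first by apply/eqP/eqP => ->; rewrite invK.
  exact: (fconnect_sym (inj_comp injf injI)).
have csym : connect_sym e := sym_connect_sym symE.
have partP : partition P K.
  apply: equivalence_partitionP => x y z _ _ _; split; first exact: connect0.
  by move=> Hxy; apply: (same_connect csym Hxy z).
have keptC : forall x y, connect e x y -> x != y -> kept inv isf y.
  move=> x y; rewrite csym => /connectP [[|z p]] /=; first by move=> _ ->; rewrite eqxx.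
  by case/andP => /and3P [].
have PK : forall C, C \in P -> exists2 x, x \in K & C = ss_component inv fc isf x.
  move=> C /imsetP [x Kx ->]; exists x => //; apply/setP => y; rewrite !inE.
  case: (eqVneq x y) => [<-|nxy]; first by rewrite connect0 andbT; rewrite inE in Kx.
  by apply/andP/idP => [[]//|H]; split=> //; apply: keptC H nxy.
have CK : forall C, C \in P -> forall d, d \in C -> kept inv isf d.
  move=> C /PK [x Kx ->] d; rewrite inE => H.
  case: (eqVneq x d) => [<-|nxd]; first by rewrite inE in Kx.
  exact: keptC H nxd.
have sumP : forall g : D -> nat, (forall d, ~~ kept inv isf d -> g d = 0) ->
    \sum_(C in P) \sum_(d in C) g d = \sum_d g d.
  move=> g Hg; have := set_partition_big P (E := g) partP; rewrite /= => <-.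
  rewrite big_mkcond /=; apply: eq_bigr => d _; rewrite inE.
  by case: ifP => // /negbT /Hg ->.
pose gE := fun d => (kept inv isf d && edge_rep inv d : nat).
pose gS := fun d => (edge_rep inv d && external inv isf d && selected inv isf sel d : nat).
pose gF := fun d => if face_rep fc isf d then order fc d else 0.
have hE : forall C, C \in P -> n_edges_in inv C = \sum_(d in C) gE d.
  move=> C PC; rewrite /n_edges_in -sum1_card big_mkcond [RHS]big_mkcond.
  apply: eq_bigr => d _; rewrite !inE /gE; case: (boolP (d \in C)) => dC //=.
  by rewrite (CK C PC d dC); case: (edge_rep inv d).
have hS : forall C : {set D}, sel_ext_in inv isf sel C = \sum_(d in C) gS d.
  move=> C; rewrite /sel_ext_in -sum1_card big_mkcond [RHS]big_mkcond.
  apply: eq_bigr => d _; rewrite !inE /gS; case: (d \in C) => //=.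
have hF : forall C : {set D}, face_len_in fc isf C = \sum_(d in C) gF d.
  by move=> C; rewrite /face_len_in big_mkcondr.
have hEk : forall d, ~~ kept inv isf d -> gE d = 0.
  by move=> d /negbTE Hd; rewrite /gE Hd.
have hSk : forall d, ~~ kept inv isf d -> gS d = 0.
  move=> d; rewrite /gS /kept /selected /external.
  by case: (isf d); case: (isf (inv d)); rewrite ?andbF.
have hFk : forall d, ~~ kept inv isf d -> gF d = 0.
  move=> d; rewrite /gF /kept /face_rep; by case: (isf d).
have H1 : ((\sum_d gE d)%:R - mu * (\sum_d gF d)%:R <= (\sum_d gS d)%:R :> R)%R.
  rewrite -(sumP _ hEk) -(sumP _ hSk) -(sumP _ hFk) !natr_sum mulr_sumr -sumrB.
  apply: ler_sum => C PC; have [x Kx EC] := PK C PC.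
  rewrite -hE // -hS -hF EC; apply: HX; by rewrite inE in Kx.
have H2 : \sum_d gF d <= \sum_(d | isf d) 1.
  rewrite -(@faces_le D fc isf injf isfc) [leqRHS]big_mkcond /=.
  by apply: eq_leq; apply: eq_bigr => d _; rewrite /gF /face_rep.
have H3 := @count_le D inv isf sel invK.
have H4 : \sum_d gF d + \sum_d gS d <= 2 * \sum_d gE d.
  exact: leq_trans (leq_add H2 (leqnn _)) H3.
have H5 : ((\sum_d gF d)%:R + (\sum_d gS d)%:R <= 2 * (\sum_d gE d)%:R :> R)%R.
  by rewrite -natrD -[2%R]/(2%:R)%R -natrM ler_nat.
have -> : sel_ext_in inv isf sel [set: D] = \sum_d gS d.
  by rewrite hS; apply: eq_bigl => d; rewrite inE.
have -> : face_len_in fc isf [set: D] = \sum_d gF d.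
  by rewrite hF; apply: eq_bigl => d; rewrite inE.
move: H1 H5; set a := ((\sum_d gE d)%:R)%R; set b := ((\sum_d gF d)%:R)%R;
  set c := ((\sum_d gS d)%:R)%R => H1 H5.
have H6 : (mu * b = mu * b)%R by [].
nra.
Qed.
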